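(* Let $q$ be an indecomposable pattern. Then $\lim_{n\to\infty}\sqrt[n]{\textup{Sav}_n(q)}$ exists (and is finite).
   Context: Permutations are written in one-line notation $p=p_1\cdots p_n$ with $p_i=p(i)$. $p$ contains a pattern $q=q_1\cdots q_k$ if there are indices $i_1<\cdots<i_k$ with $p_{i_r}<p_{i_s}$ iff $q_r<q_s$; otherwise $p$ avoids $q$. $p^2(i)=p(p(i))$. A permutation $p$ is strongly $q$-avoiding if both $p$ and $p^2$ avoid $q$, and $\textup{Sav}_n(q)$ is the number of strongly $q$-avoiding permutations of length $n$. The direct sum of permutations $p$ (length $n$) and $p'$ (length $m$) is the permutation $p\oplus p'$ of length $n+m$ equal to $p_1\cdots p_n(p'_1+n)\cdots(p'_m+n)$. A pattern $q$ is indecomposable if it cannot be written as $q=a\oplus b$ with $a,b$ both nonempty, i.e. there is no cut of $q$ into a nonempty prefix and nonempty suffix with every entry of the prefix smaller than every entry of the suffix. *)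

(* Defs.v *)
From HB Require Import structures.
From mathcomp Require Import all_boot all_fingroup.
From Stdlib Require Import Reals.

Set Implicit Arguments.
Unset Strict Implicit.
Unset Printing Implicit Defensive.

(* Permutations of length n are elements of 'S_n acting on {0,...,n-1}
   (0-based version of one-line notation: p_i = p i). *)

Definition contains (n k : nat) (p : 'S_n) (q : 'S_k) : bool :=
  [exists f : {ffun 'I_k -> 'I_n},
     [forall r : 'I_k, forall s : 'I_k,
        ((r < s)%N ==> (f r < f s)%N) &&
        ((p (f r) < p (f s))%N == (q r < q s)%N)]].

Definition avoids (n k : nat) (p : 'S_n) (q : 'S_k) : bool := ~~ contains p q.

Definition strongly_avoids (n k : nat) (p : 'S_n) (q : 'S_k) : bool :=
  avoids p q && avoids (p * p)%g q.

Definition Sav (n k : nat) (q : 'S_k) : nat :=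
  #|[set p : 'S_n | strongly_avoids p q]|.

Definition indecomposable (k : nat) (q : 'S_k) : Prop :=
  ~ (exists m : nat, [/\ (0 < m)%N, (m < k)%N &
        forall i j : 'I_k, (i < m)%N -> (m <= j)%N -> (q i < q j)%N]).

(* n-th root of a nonnegative real (0 for x <= 0, avoiding Stdlib's ln 0 = 0). *)
Definition nthroot (x : R) (n : nat) : R :=
  match Rlt_dec 0 x with
  | left _ => Rpower x (/ INR n)
  | right _ => 0%R
  end.

(* Main.v *)
Require Import Defs.
From Stdlib Require Import Reals.
From Stdlib Require Import Lra Lia Classical ClassicalEpsilon.
From HB Require Import structures.
From mathcomp Require Import all_boot all_fingroup zify.
Set Implicit Arguments.
Unset Strict Implicit.
Unset Printing Implicit Defensive.

Lemma transfer (k : nat) (a u w : nat -> nat) :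
  (forall i j, i < k -> j < k -> a i = a j -> i = j) ->
  (forall i j, i < k -> j < k -> (u i < u j) = (a i < a j)) ->
  (forall i j, i < k -> j < k -> u i < u j -> w i < w j) ->
  forall i j, i < k -> j < k -> (w i < w j) = (a i < a j).
Proof.
move=> ainj hu hw i j ik jk.
case: (ltngtP (a i) (a j)) => h.
- by apply: hw => //; rewrite hu.
- have : w j < w i by apply: hw => //; rewrite hu.
  by move=> lt; apply/negbTE; rewrite -leqNgt ltnW.
- by rewrite (ainj _ _ ik jk h) ltnn.
Qed.

Lemma div_lt t a b : a %/ t < b %/ t -> a < b.
Proof. by move=> H; rewrite ltnNge; apply/negP => /(leq_div2r t); rewrite leqNgt H. Qed.

Section Geo.
Variable N : nat.
Definition pt := ('I_N.+1 * 'I_N.+1)%type.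
Definition pt0 : pt := (ord0, ord0).


Lemma fin_choice (k : nat) (P : nat -> pt -> bool) :
  (forall i, i < k -> exists x, P i x) ->
  exists g : nat -> pt, forall i, i < k -> P i (g i).
Proof.
move=> H; exists (fun i => odflt pt0 [pick x | P i x]) => i /H [x Px].
by case: pickP => [y //|/(_ x)]; rewrite Px.
Qed.

Section Pat.
Variables (k : nat) (al be : nat -> nat).

Definition cont (p1 p2 : pt -> 'I_N.+1) (M : {set pt}) : Prop :=
  exists g : nat -> pt, (forall i, i < k -> g i \in M) /\
   (forall i j, i < k -> j < k ->
      (p1 (g i) < p1 (g j)) = (al i < al j) /\ (p2 (g i) < p2 (g j)) = (be i < be j)).

Definition cp (t : nat) (x : pt) : pt := (inord (x.1 %/ t), inord (x.2 %/ t)).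

Lemma cp1 t x : val (cp t x).1 = x.1 %/ t.
Proof. by rewrite /= inordK // (leq_ltn_trans (leq_div _ _) (ltn_ord _)). Qed.
Lemma cp2 t x : val (cp t x).2 = x.2 %/ t.
Proof. by rewrite /= inordK // (leq_ltn_trans (leq_div _ _) (ltn_ord _)). Qed.

Definition contr t (M : {set pt}) := cp t @: M.

Hypothesis al_inj : forall i j, i < k -> j < k -> al i = al j -> i = j.
Hypothesis be_inj : forall i j, i < k -> j < k -> be i = be j -> i = j.

Lemma contr_cont (p1 p2 : pt -> 'I_N.+1) t M :
  (forall x, val (p1 (cp t x)) = p1 x %/ t) -> (forall x, val (p2 (cp t x)) = p2 x %/ t) ->
  cont p1 p2 (contr t M) -> cont p1 p2 M.
Proof.
move=> h1 h2 [g [gM gord]].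
have [h hP] : exists h : nat -> pt, forall i, i < k -> (h i \in M) && (cp t (h i) == g i).
  apply: (@fin_choice k (fun i x => (x \in M) && (cp t x == g i))) => i /gM /imsetP [x xM ->]; exists x; by rewrite xM eqxx.
have hM i : i < k -> h i \in M by move=> /hP /andP [].
have hg i : i < k -> cp t (h i) = g i by move=> /hP /andP [_ /eqP].
exists h; split => // i j ik jk; split.
- apply: (@transfer k al (fun i => p1 (g i)) (fun i => p1 (h i)) al_inj) => // [i' j' i'k j'k|].
  + by case: (gord _ _ i'k j'k).
  + move=> i' j' i'k j'k; rewrite -(hg _ i'k) -(hg _ j'k) !h1; exact: div_lt.
- apply: (@transfer k be (fun i => p2 (g i)) (fun i => p2 (h i)) be_inj) => // [i' j' i'k j'k|].
  + by case: (gord _ _ i'k j'k).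
  + move=> i' j' i'k j'k; rewrite -(hg _ i'k) -(hg _ j'k) !h2; exact: div_lt.
Qed.


Lemma card_interval (A : {set 'I_N.+1}) lo len :
  (forall x, x \in A -> lo <= x < lo + len) -> #|A| <= len.
Proof.
move=> H; rewrite cardE -(size_map val) -(size_iota lo len); apply: uniq_leq_size.
  by rewrite map_inj_uniq ?enum_uniq //; exact: val_inj.
by move=> y /mapP [x]; rewrite mem_enum => /H xin ->; rewrite mem_iota.
Qed.

Lemma div_bounds t a q : 0 < t -> a %/ t = q -> q * t <= a < q * t + t.
Proof.
move=> tp <-; rewrite {2 3}(divn_eq a t) leq_addr /= ltn_add2l ltn_pmod //.
Qed.

Definition Mb t (M : {set pt}) (b : pt) := [set x in M | cp t x == b].

Lemma card_setT_set (T : finType) : #|{set T}| = 2 ^ #|T|.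
Proof.
rewrite -cardsT -card_powerset; apply: eq_card => S.
have -> : (S \in powerset [set: T]) = true by rewrite (powersetE S [set: T]) subsetT.
by [].
Qed.

Lemma sort_nth_lt (s : seq nat) i j : uniq s -> i < j < size s ->
  nth 0 (sort leq s) i < nth 0 (sort leq s) j.
Proof.
move=> us /andP [ij js].
have ss : sorted ltn (sort leq s) by rewrite ltn_sorted_uniq_leq sort_uniq us sort_sorted //; exact: leq_total.
apply: (sorted_ltn_nth ltn_trans 0 ss) => //; rewrite inE size_sort //.
exact: ltn_trans js.
Qed.

Lemma sort_nth_in (s : seq nat) i : i < size s -> nth 0 (sort leq s) i \in s.
Proof. by move=> ilt; rewrite -(mem_sort leq) mem_nth // size_sort. Qed.

End Pat.
End Geo.

Section Wide.
Variables (N k : nat) (al be : nat -> nat) (t : nat).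
Hypothesis al_inj : forall i j, i < k -> j < k -> al i = al j -> i = j.
Hypothesis be_inj : forall i j, i < k -> j < k -> be i = be j -> i = j.
Hypothesis al_lt : forall i, i < k -> al i < k.
Hypothesis be_lt : forall i, i < k -> be i < k.
Hypothesis tpos : 0 < t.
Hypothesis kpos : 0 < k.
Variables (p1 p2 : pt N -> 'I_N.+1).
Hypothesis h1 : forall x, val (p1 (cp t x)) = p1 x %/ t.
Hypothesis h2 : forall x, val (p2 (cp t x)) = p2 x %/ t.
Hypothesis hinj : forall x y, p1 x = p1 y -> p2 x = p2 y -> x = y.
Variable M : {set pt N}.
Hypothesis Mav : ~ cont k al be p1 p2 M.

Definition modt (y : 'I_N.+1) : 'I_t := Ordinal (ltn_pmod y tpos).
Definition colset b := [set y : 'I_t | [exists x in Mb t M b, modt (p2 x) == y]].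

Lemma Mb_p2 b x : x \in Mb t M b -> p2 x %/ t = p2 b.
Proof. by rewrite inE => /andP [_ /eqP <-]; rewrite h2. Qed.
Lemma Mb_p1 b x : x \in Mb t M b -> p1 x %/ t = p1 b.
Proof. by rewrite inE => /andP [_ /eqP <-]; rewrite h1. Qed.
Lemma Mb_M b x : x \in Mb t M b -> x \in M.
Proof. by rewrite inE => /andP []. Qed.

Lemma fiber_small a S (F : {set pt N}) :
  (forall b, b \in F -> [/\ val (p2 b) = a, colset b = S & k <= #|p2 @: Mb t M b|]) ->
  #|F| < k.
Proof.
move=> HF; rewrite ltnNge; apply/negP => kF; apply: Mav.
have [b0 b0F] : exists b0, b0 \in F.
  by apply/card_gt0P; apply: leq_trans kF.
have kS : k <= #|S|.
  have [pb0 cb0 wb0] := HF _ b0F.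
  apply: (leq_trans wb0); rewrite -cb0 -(card_in_imset (f:=modt)).
    apply: subset_leq_card; apply/subsetP => z /imsetP [y /imsetP [x xM ->] ->].
    by rewrite inE; apply/existsP; exists x; rewrite xM eqxx.
  move=> y y' /imsetP [x xM ->] /imsetP [x' x'M ->] /(congr1 val) /= e.
  apply: val_inj => /=; rewrite (divn_eq (p2 x) t) (divn_eq (p2 x') t) e.
  by rewrite (Mb_p2 xM) (Mb_p2 x'M).
pose sS := [seq val y | y <- enum S].
pose sF := [seq val (p1 b) | b <- enum F].
have uS : uniq sS by rewrite map_inj_uniq ?enum_uniq //; exact: val_inj.
have uF : uniq sF.
  rewrite map_inj_in_uniq ?enum_uniq // => b b'; rewrite !mem_enum => bF b'F e.
  apply: hinj; first exact: val_inj.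
  by apply: val_inj; have [-> _ _] := HF _ bF; have [-> _ _] := HF _ b'F.
have szS : k <= size sS by rewrite size_map -cardE.
have szF : k <= size sF by rewrite size_map -cardE.
pose xs i := nth 0 (sort leq sS) i.
pose rs i := nth 0 (sort leq sF) i.
have [g gP] : exists g : nat -> pt N, forall i, i < k ->
   (g i \in M) && (p1 (g i) %/ t == rs (al i)) && (val (p2 (g i)) == a * t + xs (be i)).
  apply: (@fin_choice N k (fun i x => (x \in M) && (p1 x %/ t == rs (al i))
                                     && (val (p2 x) == a * t + xs (be i)))) => i ik.
  have /mapP [b] : rs (al i) \in sF by apply: sort_nth_in; apply: leq_trans (al_lt ik) szF.
  rewrite mem_enum => bF rsb.
  have /mapP [y] : xs (be i) \in sS by apply: sort_nth_in; apply: leq_trans (be_lt ik) szS.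
  rewrite mem_enum => yS xsy.
  have [pb cb _] := HF _ bF.
  move: yS; rewrite -cb inE => /existsP [x /andP [xM /eqP my]].
  exists x; rewrite (Mb_M xM) (Mb_p1 xM) rsb eqxx /=.
  rewrite xsy -my /= -pb; apply/eqP; by rewrite {1}(divn_eq (p2 x) t) (Mb_p2 xM).
exists g; split; first by move=> i /gP /andP [/andP [] ].
move=> i j ik jk; split.
- apply: (@transfer k al al (fun i => val (p1 (g i))) al_inj) => // i' j' i'k j'k lt.
  apply: (@div_lt t).
  move: (gP _ i'k) (gP _ j'k) => /andP [/andP [_ /eqP ->] _] /andP [/andP [_ /eqP ->] _].
  apply: sort_nth_lt => //; rewrite lt /=; exact: leq_trans (al_lt j'k) szF.
- apply: (@transfer k be be (fun i => val (p2 (g i))) be_inj) => // i' j' i'k j'k lt.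
  move: (gP _ i'k) (gP _ j'k) => /andP [_ /eqP ->] /andP [_ /eqP ->].
  rewrite ltn_add2l; apply: sort_nth_lt => //; rewrite lt /=; exact: leq_trans (be_lt j'k) szS.
Qed.

Lemma wide_count m : (forall x, x \in M -> p2 x < m * t) ->
  #|[set b in contr t M | k <= #|p2 @: Mb t M b|]| <= m * (k.-1 * 2 ^ t).
Proof.
move=> Mbox; rewrite -sum1_card.
rewrite (partition_big (fun b => p2 b) (fun a : 'I_N.+1 => a < m)) /=; last first.
  move=> b; rewrite inE => /andP [/imsetP [x xM ->] _].
  by rewrite h2 ltn_divLR // Mbox.
apply: (@leq_trans (\sum_(a : 'I_N.+1 | a < m) (k.-1 * 2 ^ t))).
  apply: leq_sum => a am.
  rewrite (partition_big colset predT) //=.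
  apply: (@leq_trans (\sum_(S : {set 'I_t}) k.-1)).
    apply: leq_sum => S _; rewrite sum1_card.
    set F := [set b | (b \in [set b in contr t M | k <= #|p2 @: Mb t M b|]) && (p2 b == a) && (colset b == S)].
    apply: (@leq_trans #|F|); first by apply: subset_leq_card; apply/subsetP => b; rewrite inE.
    rewrite -ltnS prednK //; apply: (@fiber_small a S) => b.
    rewrite !inE => /andP [/andP [/andP [_ w] /eqP <-] /eqP <-]; by split.
  by rewrite sum_nat_const card_setT_set card_ord mulnC.
rewrite sum_nat_const leq_mul2r; apply/orP; right.
apply: (@leq_trans #|[set a : 'I_N.+1 | 0 <= a < 0 + m]|).
  by apply: subset_leq_card; apply/subsetP => a; rewrite inE.
by apply: (@card_interval N _ 0 m) => a; rewrite inE.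
Qed.

End Wide.

Lemma sum_ind (T : finType) (A : {set T}) (P : pred T) :
  \sum_(i in A) (P i : nat) = #|[set i in A | P i]|.
Proof.
rewrite -sum1_card [RHS]big_mkcond /= [LHS]big_mkcond /=; apply: eq_bigr => i _.
by rewrite inE; case: (i \in A); case: (P i).
Qed.

Section MT.
Variables (N k : nat) (al be : nat -> nat).
Hypothesis al_inj : forall i j, i < k -> j < k -> al i = al j -> i = j.
Hypothesis be_inj : forall i j, i < k -> j < k -> be i = be j -> i = j.
Hypothesis al_lt : forall i, i < k -> al i < k.
Hypothesis be_lt : forall i, i < k -> be i < k.
Hypothesis kpos : 0 < k.

Definition fs1 (x : pt N) : 'I_N.+1 := x.1.
Definition fs2 (x : pt N) : 'I_N.+1 := x.2.

Definition boxb m (M : {set pt N}) := M \subset [set x : pt N | (x.1 < m) && (x.2 < m)].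

Lemma boxP m M x : boxb m M -> x \in M -> (x.1 < m) /\ (x.2 < m).
Proof. by move=> /subsetP H /H; rewrite inE => /andP. Qed.

Definition tt := k * k.
Definition Dc := 2 * (tt * tt) * (k.-1 * 2 ^ tt).
Definition cc := Dc.+1.

Lemma ttpos : 0 < tt. Proof. by rewrite muln_gt0 kpos. Qed.

Lemma fs_inj (x y : pt N) : fs1 x = fs1 y -> fs2 x = fs2 y -> x = y.
Proof. by case: x y => [a b] [c d] /= -> ->. Qed.

Lemma contr_box t m M : 0 < t -> boxb (m * t) M -> boxb m (contr t M).
Proof.
move=> tp bM; apply/subsetP => b /imsetP [x xM ->]; rewrite inE.
have [h1 h2] := boxP bM xM.
by rewrite (cp1 t x) (cp2 t x) !ltn_divLR // h1 h2.
Qed.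

Lemma Mb_size t M b : 0 < t -> #|Mb t M b| <= #|fs1 @: Mb t M b| * #|fs2 @: Mb t M b|.
Proof.
move=> tp; rewrite -cardsX; apply: subset_leq_card; apply/subsetP => x xb.
by rewrite inE; apply/andP; split; apply: imset_f.
Qed.

Lemma Mb_col t M b : 0 < t -> #|fs1 @: Mb t M b| <= t /\ #|fs2 @: Mb t M b| <= t.
Proof.
move=> tp; split.
- apply: (@card_interval N _ (b.1 * t) t) => y /imsetP [x]; rewrite inE => /andP [_ /eqP <-] ->.
  by apply: div_bounds => //; rewrite (cp1 t x).
- apply: (@card_interval N _ (b.2 * t) t) => y /imsetP [x]; rewrite inE => /andP [_ /eqP <-] ->.
  by apply: div_bounds => //; rewrite (cp2 t x).
Qed.

Lemma cont_swap M : cont k be al fs2 fs1 M -> cont k al be fs1 fs2 M.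
Proof.
move=> [g [gM gH]]; exists g; split => // i j ik jk.
by have [-> ->] := gH _ _ ik jk.
Qed.

Lemma MT_step m M : boxb (m * tt) M -> ~ cont k al be fs1 fs2 M ->
  #|contr tt M| <= cc * m -> #|M| <= cc * (m * tt).
Proof.
move=> bM Mav IH.
have tp := ttpos.
set B := contr tt M.
set W := [set b in B | k <= #|fs2 @: Mb tt M b|].
set T := [set b in B | k <= #|fs1 @: Mb tt M b|].
have Wc : #|W| <= m * (k.-1 * 2 ^ tt).
  apply: (@wide_count N k al be tt al_inj be_inj al_lt be_lt tp kpos fs1 fs2) => //.
  - by move=> x; exact: cp1.
  - by move=> x; exact: cp2.
  - exact: fs_inj.
  - by move=> x /(boxP bM) [].
have Tc : #|T| <= m * (k.-1 * 2 ^ tt).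
  apply: (@wide_count N k be al tt be_inj al_inj be_lt al_lt tp kpos fs2 fs1) => //.
  - by move=> x; exact: cp2.
  - by move=> x; exact: cp1.
  - by move=> x y e1 e2; exact: fs_inj.
  - by move=> /cont_swap.
  - by move=> x /(boxP bM) [].
have Mc : #|M| <= \sum_(b in B) #|Mb tt M b|.
  rewrite -sum1_card (partition_big (cp tt) (mem B)) /=; last by move=> x xM; apply: imset_f.
  apply: leq_sum => b _; rewrite sum1_card; apply: subset_leq_card.
  by apply/subsetP => x; rewrite !inE.
have bb : forall b, #|Mb tt M b| <= k.-1 * k.-1 + tt * tt * (b \in W) + tt * tt * (b \in T).
  move=> b.
  have [c1 c2] := Mb_col M b tp.
  apply: leq_trans (Mb_size M b tp) _.
  case: (boolP (b \in B)) => bB; last first.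
    have -> : Mb tt M b = set0.
      apply/setP => x; rewrite !inE; apply/negP => /andP [xM /eqP e].
      by move: bB; rewrite -e /B imset_f.
    by rewrite imset0 cards0.
  rewrite !inE bB /=.
  case: (leqP k #|fs2 @: Mb tt M b|) => w; case: (leqP k #|fs1 @: Mb tt M b|) => h /=;
   rewrite ?muln1 ?muln0 ?addn0.
  - apply: (leq_trans (leq_mul c1 c2)); move: (tt * tt) (k.-1 * k.-1) => z y; lia.
  - apply: (leq_trans (leq_mul c1 c2)); move: (tt * tt) (k.-1 * k.-1) => z y; lia.
  - apply: (leq_trans (leq_mul c1 c2)); move: (tt * tt) (k.-1 * k.-1) => z y; lia.
  - apply: leq_mul; rewrite -ltnS prednK //.
apply: (leq_trans Mc).
apply: (@leq_trans (\sum_(b in B) (k.-1 * k.-1 + tt * tt * (b \in W) + tt * tt * (b \in T)))).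
  by apply: leq_sum => b _; exact: bb.
rewrite !big_split /= -!big_distrr /= !sum_ind sum_nat_const.
have -> : [set i in B | i \in W] = W by apply/setP => b; rewrite !inE andb_idl // => /andP [].
have -> : [set i in B | i \in T] = T by apply/setP => b; rewrite !inE andb_idl // => /andP [].
have kk : k.-1 * k.-1 + 1 <= tt by rewrite /tt; case: (k) kpos => // k' _ /=; nia.
have : #|B| * (k.-1 * k.-1) <= cc * m * (k.-1 * k.-1) by rewrite leq_mul2r IH orbT.
rewrite /cc /Dc in IH * => H.
nia.
Qed.

Lemma MT j M : boxb (tt ^ j) M -> ~ cont k al be fs1 fs2 M -> #|M| <= cc * tt ^ j.
Proof.
elim: j M => [|j IH] M bM Mav.
  rewrite expn0 muln1.
  apply: (@leq_trans 1); last by [].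
  apply: (@leq_trans #|[set pt0 N]|); last by rewrite cards1.
  apply: subset_leq_card; apply/subsetP => x xM; rewrite inE.
  have [h1 h2] := boxP bM xM.
  by apply/eqP; apply: fs_inj; apply: val_inj; rewrite /fs1 /fs2 /pt0 /=; move: h1 h2; rewrite expn0 !ltnS !leqn0 => /eqP e1 /eqP e2; rewrite ?e1 ?e2.
rewrite expnSr; apply: MT_step => //; first by rewrite -expnSr.
apply: IH.
  apply: contr_box; first exact: ttpos.
  by rewrite -expnSr.
move=> Hc; apply: Mav.
apply: (@contr_cont N k al be al_inj be_inj fs1 fs2 tt) => //.
- by move=> x; exact: cp1.
- by move=> x; exact: cp2.
Qed.

End MT.

Definition pb (P : Prop) : bool := if excluded_middle_informative P then true else false.
Lemma pbP (P : Prop) : reflect P (pb P).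
Proof. by rewrite /pb; case: excluded_middle_informative => h; constructor. Qed.

Section Klazar.
Variables (N k : nat) (al be : nat -> nat).
Hypothesis al_inj : forall i j, i < k -> j < k -> al i = al j -> i = j.
Hypothesis be_inj : forall i j, i < k -> j < k -> be i = be j -> i = j.
Hypothesis al_lt : forall i, i < k -> al i < k.
Hypothesis be_lt : forall i, i < k -> be i < k.
Hypothesis k2 : 1 < k.
Let kpos : 0 < k := ltnW k2.

Definition Tset m := [set M : {set pt N} | boxb m M && ~~ pb (cont k al be (@fs1 N) (@fs2 N) M)].

Lemma TsetP m M : M \in Tset m -> boxb m M /\ ~ cont k al be (@fs1 N) (@fs2 N) M.
Proof. by rewrite inE => /andP [b /pbP c]. Qed.

Lemma Tset_mono m m' : m <= m' -> #|Tset m| <= #|Tset m'|.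
Proof.
move=> mm; apply: subset_leq_card; apply/subsetP => M; rewrite !inE => /andP [b ->].
rewrite andbT; apply/subsetP => x /(boxP b) [h1 h2]; rewrite inE.
by rewrite (leq_trans h1 mm) (leq_trans h2 mm).
Qed.

Let tp : 0 < tt k := ttpos kpos.

Lemma U_size (B : {set pt N}) :
  #|[set x : pt N | cp (tt k) x \in B]| <= tt k * tt k * #|B|.
Proof.
rewrite -sum1_card (partition_big (cp (tt k)) (mem B)) /=; last by move=> x; rewrite inE.
rewrite mulnC -sum_nat_const; apply: leq_sum => b _; rewrite sum1_card.
apply: (@leq_trans #|Mb (tt k) [set: pt N] b|).
  by apply: subset_leq_card; apply/subsetP => x; rewrite !inE => /andP [_ ->].
apply: leq_trans (Mb_size _ _ tp) _.
by have [c1 c2] := Mb_col [set: pt N] b tp; apply: leq_mul.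
Qed.

Lemma Kstep j : #|Tset (tt k ^ j * tt k)| <=
   #|Tset (tt k ^ j)| * 2 ^ (tt k * tt k * (cc k * tt k ^ j)).
Proof.
rewrite -sum1_card (partition_big (contr (tt k)) (mem (Tset (tt k ^ j)))) /=; last first.
  move=> M /TsetP [bM cM]; rewrite inE; apply/andP; split.
    exact: contr_box.
  apply/pbP => Hc; apply: cM.
  apply: (@contr_cont N k al be al_inj be_inj (@fs1 N) (@fs2 N) (tt k)) => //.
  - by move=> x; exact: cp1.
  - by move=> x; exact: cp2.
rewrite mulnC -sum_nat_const; apply: leq_sum => B BT; rewrite sum1_card.
apply: (@leq_trans #|powerset [set x : pt N | cp (tt k) x \in B]|).
  apply: subset_leq_card; apply/subsetP => M; rewrite inE => /andP [_ /eqP e].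
  apply/subsetP => x xM; rewrite inE -e; exact: imset_f.
rewrite card_powerset leq_pexp2l //; apply: leq_trans (U_size B) _.
rewrite leq_mul2l; apply/orP; right.
have [bB cB] := TsetP BT.
exact: (@MT N k al be al_inj be_inj al_lt be_lt kpos).
Qed.

Lemma Kbound j : #|Tset (tt k ^ j)| <= 2 ^ (1 + tt k * tt k * cc k * tt k ^ j).
Proof.
have t2 : 2 <= tt k by rewrite /tt; nia.
elim: j => [|j IH].
  apply: (@leq_trans #|powerset [set pt0 N]|).
    apply: subset_leq_card; apply/subsetP => M /TsetP [bM _].
    rewrite (powersetE M); apply/subsetP => x xM; rewrite inE.
    have [h1 h2] := boxP bM xM.
    by apply/eqP; apply: fs_inj; apply: val_inj; rewrite /fs1 /fs2 /pt0 /=; move: h1 h2;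
    rewrite expn0 !ltnS !leqn0 => /eqP e1 /eqP e2; rewrite ?e1 ?e2.
  by rewrite card_powerset cards1 leq_pexp2l //; lia.
rewrite expnSr; apply: leq_trans (Kstep j) _.
apply: leq_trans (leq_mul IH (leqnn _)) _.
rewrite -expnD leq_pexp2l //.
move: (tt k ^ j) (cc k) t2 => a c t2'; nia.
Qed.

Definition KK := 2 ^ (1 + tt k * tt k * cc k * tt k).

Lemma Tbound n : #|Tset n| <= KK ^ n.
Proof.
have t2 : 2 <= tt k by rewrite /tt; nia.
case: n => [|n].
  rewrite expn0; apply: (@leq_trans #|[set set0 : {set pt N}]|); last by rewrite cards1.
  apply: subset_leq_card; apply/subsetP => M /TsetP [bM _]; rewrite inE.
  apply/eqP/setP => x; rewrite inE; apply/negP => xM.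
  by have [h1 _] := boxP bM xM.
set j := (trunc_log (tt k) n.+1).+1.
have h1 : n.+1 <= tt k ^ j by apply: ltnW; apply: trunc_log_ltn.
have h2 : tt k ^ j <= tt k * n.+1.
  by rewrite /j expnS leq_mul2l trunc_logP ?orbT.
apply: leq_trans (Tset_mono h1) _.
apply: leq_trans (Kbound j) _.
rewrite /KK -expnM leq_pexp2l //.
move: h2; move: (tt k ^ j) (tt k * tt k * cc k) (tt k) => a c t; nia.
Qed.

End Klazar.

Section Graph.
Variables (k : nat) (q : 'S_k).

Definition sig (i : nat) : nat := odflt 0 (omap (fun r : 'I_k => val (q r)) (insub i)).
Lemma sigE (r : 'I_k) : sig r = q r.
Proof. by rewrite /sig valK. Qed.
Lemma sig_lt i : i < k -> sig i < k.
Proof. by move=> ik; rewrite -[i]/(val (Ordinal ik)) sigE. Qed.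
Lemma sig_inj i j : i < k -> j < k -> sig i = sig j -> i = j.
Proof.
move=> ik jk; rewrite -[i]/(val (Ordinal ik)) -[j]/(val (Ordinal jk)) !sigE.
by move=> /val_inj /perm_inj ->.
Qed.
Lemma id_inj i j : i < k -> j < k -> id i = id j -> i = j.
Proof. by []. Qed.
Lemma id_lt i : i < k -> id i < k.
Proof. by []. Qed.

Variable n : nat.
Definition gr (p : 'S_n) : {set pt n} := [set ((inord i : 'I_n.+1), (inord (p i) : 'I_n.+1)) | i : 'I_n].

Lemma inordn (i : 'I_n) : nat_of_ord (inord i : 'I_n.+1) = i.
Proof. by rewrite inordK // (ltn_trans (ltn_ord i)). Qed.

Lemma gr_inj : injective gr.
Proof.
move=> p p' e; apply/permP => i.
have : ((inord i : 'I_n.+1), (inord (p i) : 'I_n.+1)) \in gr p' by rewrite -e; apply: imset_f.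
case/imsetP => i' _ [e1 e2].
move: (congr1 (@nat_of_ord _) e1) (congr1 (@nat_of_ord _) e2); rewrite !inordn => /val_inj <- /val_inj //.
Qed.

Lemma gr_box p : boxb n (gr p).
Proof. by apply/subsetP => x /imsetP [i _ ->]; rewrite inE /= !inordn !ltn_ord. Qed.

Lemma gr_avoid p : ~~ contains p q -> ~ cont k id sig (@fs1 n) (@fs2 n) (gr p).
Proof.
move=> /negP nc [g [gM gH]]; apply: nc.
have [f fP] := @fin_all_exists _ (fun _ => 'I_n)
    (fun (r : 'I_k) a => g r = ((inord a : 'I_n.+1), (inord (p a) : 'I_n.+1)))
    (fun r => match imsetP (gM _ (ltn_ord r)) with ex_intro2 a _ e => ex_intro _ a e end).
apply/existsP; exists [ffun r => f r]; apply/forallP => r; apply/forallP => s.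
rewrite !ffunE.
have [H1 H2] := gH _ _ (ltn_ord r) (ltn_ord s).
move: H1 H2; rewrite !fP /fs1 /fs2 /= !inordn !sigE => -> ->.
by rewrite implybb eqxx.
Qed.

Lemma Sav_le : Sav n q <= #|Tset n k id sig n|.
Proof.
rewrite /Sav -(card_imset _ gr_inj); apply: subset_leq_card; apply/subsetP => M.
move=> /imsetP [p]; rewrite inE => /andP [av _] ->.
rewrite inE gr_box /=; apply/negP => /pbP; exact: gr_avoid.
Qed.

End Graph.

Lemma Sav_exp k (q : 'S_k) : 1 < k -> exists K, forall n, Sav n q <= K ^ n.
Proof.
move=> k2; exists (KK k) => n.
apply: leq_trans (Sav_le q n) _.
apply: (@Tbound n k id (sig q) (@id_inj k) (@sig_inj k q) (@id_lt k) (@sig_lt k q) k2).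
Qed.

Section DSum.
Variables (n m : nat).

Definition dsf (p : 'S_n) (p' : 'S_m) (i : 'I_(n + m)) : 'I_(n + m) :=
  unsplit (match split i with inl a => inl (p a) | inr b => inr (p' b) end).

Lemma dsf_inj p p' : injective (dsf p p').
Proof.
move=> i j; rewrite /dsf => /(congr1 split); rewrite !unsplitK.
case Ei: (split i) => [a|b]; case Ej: (split j) => [a'|b'] //=.
- by move=> [] /perm_inj e; rewrite -(splitK i) -(splitK j) Ei Ej e.
- by move=> [] /perm_inj e; rewrite -(splitK i) -(splitK j) Ei Ej e.
Qed.

Definition dsum p p' : 'S_(n + m) := perm (@dsf_inj p p').

Lemma dsumL p p' (a : 'I_n) : dsum p p' (lshift m a) = lshift m (p a).
Proof.
have e : split (lshift m a) = inl a := unsplitK (inl _ a).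
by rewrite permE /dsf e.
Qed.
Lemma dsumR p p' (b : 'I_m) : dsum p p' (rshift n b) = rshift n (p' b).
Proof.
have e : split (rshift n b) = inr b := unsplitK (inr _ b).
by rewrite permE /dsf e.
Qed.

Lemma dsum_sq p p' : (dsum p p' * dsum p p')%g = dsum (p * p)%g (p' * p')%g.
Proof.
apply/permP => i; rewrite permM -(splitK i).
case: (split i) => [a|b] /=.
- by rewrite !dsumL permM.
- by rewrite !dsumR permM.
Qed.

Lemma dsum_inj p1 p1' p2 p2' : dsum p1 p1' = dsum p2 p2' -> p1 = p2 /\ p1' = p2'.
Proof.
move=> e; split; apply/permP => a.
- by have := congr1 (fun s : 'S_(n + m) => val (s (lshift m a))) e; rewrite /= !dsumL /= => /val_inj.
- have := congr1 (fun s : 'S_(n + m) => val (s (rshift n a))) e; rewrite /= !dsumR /=.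
  by move=> /eqP; rewrite eqn_add2l => /eqP /val_inj.
Qed.

Lemma dsum_lt p p' (x : 'I_(n + m)) : (dsum p p' x < n) = (x < n).
Proof.
rewrite -(splitK x); case: (split x) => [a|b] /=.
- by rewrite dsumL /= !ltn_ord.
- by rewrite dsumR /= !ltnNge !leq_addr.
Qed.

Lemma dsum_contains k (q : 'S_k) p p' : indecomposable q ->
  contains (dsum p p') q -> contains p q \/ contains p' q.
Proof.
move=> Hind /existsP [f /forallP H].
have H' : forall r s : 'I_k, ((r < s) ==> (f r < f s)) && ((dsum p p' (f r) < dsum p p' (f s)) == (q r < q s)).
  by move=> r s; have /forallP := H r; apply.
have mono : forall r s : 'I_k, r <= s -> f r <= f s.
  move=> r s; rewrite leq_eqVlt => /orP [/eqP /val_inj -> //|rs].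
  by have /andP [/implyP /(_ rs) /ltnW] := H' r s.
case: (boolP [forall r, f r < n]) => [/forallP allL|nL].
  left.
  have [g gP] : exists g : 'I_k -> 'I_n, forall r, f r = lshift m (g r).
    by exists (fun r => Ordinal (allL r)) => r; apply: val_inj.
  apply/existsP; exists [ffun r => g r]; apply/forallP => r; apply/forallP => s.
  rewrite !ffunE; have := H' r s; rewrite (gP r) (gP s) !dsumL /=.
  done.
case: (boolP [forall r, n <= f r]) => [/forallP allR|nR].
  right.
  have ltm : forall r, f r - n < m by move=> r; have := ltn_ord (f r); have := allR r; lia.
  have [g gP] : exists g : 'I_k -> 'I_m, forall r, f r = rshift n (g r).
    by exists (fun r => Ordinal (ltm r)) => r; apply: val_inj; rewrite /= subnKC.
  apply/existsP; exists [ffun r => g r]; apply/forallP => r; apply/forallP => s.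
  rewrite !ffunE; have := H' r s; rewrite (gP r) (gP s) !dsumR /= !ltn_add2l.
  done.
exfalso.
have [rR hR] : exists r, n <= f r.
  by move: nL; rewrite negb_forall => /existsP [r]; rewrite -leqNgt; exists r.
have [rL hL] : exists r, f r < n.
  by move: nR; rewrite negb_forall => /existsP [r]; rewrite -ltnNge; exists r.
case: (@arg_minnP _ rR (fun r => n <= f r) (fun r => val r) hR) => rm hm minm.
apply: Hind; exists rm; split; last first.
- move=> i j ij jm.
  have fi : f i < n by rewrite ltnNge; apply/negP => /minm /= h; lia.
  have fj : n <= f j by apply: leq_trans hm (mono _ _ jm).
  have := H' i j; move/andP => [_ /eqP <-].
  rewrite -(dsum_lt p p') in fi; rewrite leqNgt -(dsum_lt p p') -leqNgt in fj.
  exact: leq_trans fi fj.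
- exact: ltn_ord.
- rewrite lt0n; apply/negP => /eqP rm0.
  have : f rm <= f rL by apply: mono; rewrite rm0.
  lia.
Qed.

Lemma Sav_super k (q : 'S_k) : indecomposable q -> Sav n q * Sav m q <= Sav (n + m) q.
Proof.
move=> Hind; rewrite /Sav -cardsX.
rewrite -(@card_in_imset _ _ (fun x => dsum x.1 x.2)); last first.
  move=> [a b] [c d] _ _ /= /dsum_inj [-> ->] //.
apply: subset_leq_card; apply/subsetP => s /imsetP [[p p'] /=].
rewrite !inE => /andP [] /andP [a1 a2] /andP [b1 b2] ->.
rewrite /strongly_avoids /avoids dsum_sq.
apply/andP; split; apply/negP => /(dsum_contains Hind) [] //.
- by apply/negP.
- by apply/negP.
- by apply/negP.
- by apply/negP.
Qed.

End DSum.

Lemma id_savoids k (q : 'S_k) n : 1 < k -> indecomposable q -> strongly_avoids (1%g : 'S_n) q.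
Proof.
move=> k2 Hind; rewrite /strongly_avoids mulg1 andbb /avoids.
apply/negP => /existsP [f /forallP H]; apply: Hind; exists 1; split => // i j i1 j1.
have := H i => /forallP /(_ j) /andP [/implyP ij]; rewrite !perm1 => /eqP <-.
by apply: ij; lia.
Qed.

Lemma Sav_pos k (q : 'S_k) n : 1 < k -> indecomposable q -> 0 < Sav n q.
Proof.
move=> k2 Hind; rewrite /Sav card_gt0; apply/set0Pn; exists 1%g.
by rewrite inE id_savoids.
Qed.

Lemma Sav_small k (q : 'S_k) n : k <= 1 -> 0 < n -> Sav n q = 0.
Proof.
move=> k1 n0; rewrite /Sav; apply/eqP; rewrite cards_eq0; apply/eqP/setP => p.
rewrite !inE /strongly_avoids /avoids; apply/negP => /andP [/negP c _]; apply: c.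
apply/existsP; exists [ffun r => Ordinal n0]; apply/forallP => r; apply/forallP => s.
have rs : r = s by case: r s => [r hr] [s hs]; apply: val_inj => /=; lia.
by rewrite rs ltnn /= !ltnn.
Qed.

Section Fekete.
Local Open Scope R_scope.

Lemma ln_le' x y : 0 < x -> x <= y -> ln x <= ln y.
Proof.
intros hx hxy; destruct (Rle_lt_or_eq_dec _ _ hxy) as [h|h].
- left; apply ln_increasing; auto.
- subst; lra.
Qed.

Lemma super_mul (b : nat -> R) (m : nat) :
  (forall n, 0 <= b n) -> (forall n p, b n + b p <= b (n + p)%nat) ->
  forall q r, INR q * b m <= b (q * m + r)%nat.
Proof.
intros b0 bs.
assert (H : forall q, INR q * b m <= b (q * m)%nat).
{ induction q as [|q IH].
  - simpl; rewrite Rmult_0_l; apply b0.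
  - rewrite S_INR. replace (S q * m)%nat with (q * m + m)%nat by lia.
    specialize (bs (q * m)%nat m). lra. }
intros q r. specialize (H q). specialize (bs (q * m)%nat r). specialize (b0 r). lra.
Qed.

Lemma fekete_R (b : nat -> R) (B : R) :
  (forall n, 0 <= b n) -> (forall n p, b n + b p <= b (n + p)%nat) ->
  (forall n, b n <= INR n * B) -> exists s, Un_cv (fun n => b n / INR n) s.
Proof.
intros b0 bs bB.
set (E := fun x => exists n, (1 <= n)%nat /\ x = b n / INR n).
assert (Eub : bound E).
{ exists B. intros x [n [hn ->]].
  assert (0 < INR n) by (apply lt_0_INR; lia).
  specialize (bB n). apply Rmult_le_reg_r with (INR n); auto.
  unfold Rdiv; rewrite Rmult_assoc Rinv_l; lra. }
assert (Ene : exists x, E x).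
{ exists (b 1%nat / INR 1). exists 1%nat; split; auto. }
destruct (completeness E Eub Ene) as [s [sub slub]].
exists s. intros eps heps.
assert (Hm : exists m, (1 <= m)%nat /\ s - eps / 2 < b m / INR m).
{ apply NNPP; intro hno.
  assert (is_upper_bound E (s - eps / 2)).
  { intros x [n [hn ->]].
    apply Rnot_lt_le; intro hlt; apply hno; exists n; split; auto. }
  specialize (slub _ H). lra. }
destruct Hm as [m [hm1 hm]].
assert (hmpos : 0 < INR m) by (apply lt_0_INR; lia).
assert (hBm : b m / INR m <= B).
{ specialize (bB m). apply Rmult_le_reg_r with (INR m); auto.
  unfold Rdiv; rewrite Rmult_assoc Rinv_l; lra. }
assert (hbm0 : 0 <= b m / INR m).
{ unfold Rdiv; apply Rmult_le_pos; [apply b0|left; apply Rinv_0_lt_compat; auto]. }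
destruct (INR_archimed (eps / 2) (INR m * B) ltac:(lra)) as [N0 hN0].
exists (N0 + m)%nat. intros n hn.
assert (hnpos : 0 < INR n) by (apply lt_0_INR; lia).
assert (hnN : INR (N0 + m) <= INR n) by (apply le_INR; lia).
rewrite plus_INR in hnN.
unfold R_dist.
assert (hup : b n / INR n <= s) by (apply sub; exists n; split; auto; lia).
set (q := (n %/ m)%N). set (r := (n %% m)%N).
assert (hn_eq : n = (q * m + r)%nat) by exact: divn_eq.
assert (hr : (r < m)%N) by (apply: ltn_pmod; lia).
assert (hqm : INR n - INR m <= INR q * INR m).
{ assert (INR n <= INR q * INR m + INR m).
  { rewrite -mult_INR -plus_INR. apply le_INR. lia. }
  lra. }
assert (hlow : INR q * b m <= b n).
{ replace (b n) with (b (q * m + r)%nat) by (rewrite <- hn_eq; reflexivity). apply super_mul; auto. }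
set (x := b m / INR m) in *.
assert (hbm : b m = x * INR m) by (unfold x; field; lra).
assert (hlow2 : (INR n - INR m) * x <= b n).
{ rewrite hbm in hlow. apply Rle_trans with (INR q * (x * INR m)); auto.
  replace (INR q * (x * INR m)) with ((INR q * INR m) * x) by ring.
  apply Rmult_le_compat_r; auto. }
assert (hy : INR n * / INR n = 1) by (field; lra).
assert (hy0 : 0 < / INR n) by (apply Rinv_0_lt_compat; lra).
assert (hmy : 0 <= INR m * / INR n) by (apply Rmult_le_pos; lra).
assert (hlow3 : x - INR m * B / INR n <= b n / INR n).
{ unfold Rdiv.
  assert (h1 : (INR n - INR m) * x * / INR n <= b n * / INR n) by (apply Rmult_le_compat_r; lra).
  assert (h2 : INR m * / INR n * x <= INR m * / INR n * B) by (apply Rmult_le_compat_l; lra).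
  replace ((INR n - INR m) * x * / INR n) with (x * (INR n * / INR n) - INR m * / INR n * x) in h1 by ring.
  rewrite hy in h1. lra. }
assert (hsmall : INR m * B / INR n < eps / 2).
{ unfold Rdiv.
  assert (h1 : INR m * B < INR n * (eps / 2)).
  { assert (INR N0 * (eps / 2) <= INR n * (eps / 2)) by (apply Rmult_le_compat_r; lra). lra. }
  assert (h2 : INR m * B * / INR n < INR n * (eps / 2) * / INR n) by (apply Rmult_lt_compat_r; lra).
  replace (INR n * (eps / 2) * / INR n) with ((INR n * / INR n) * (eps / 2)) in h2 by ring.
  rewrite hy in h2. lra. }
rewrite Rabs_left1; lra.
Qed.

End Fekete.

Lemma powE a n : Nat.pow a n = expn a n.
Proof. by elim: n => [|n IH] //=; rewrite expnS IH. Qed.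

Lemma nthroot_exp (x : nat) (n : nat) : (0 < x)%N ->
  nthroot (INR x) n = exp (ln (INR x) / INR n).
Proof.
move=> x0; rewrite /nthroot; case: Rlt_dec => h.
  by rewrite /Rpower /Rdiv Rmult_comm.
exfalso; apply: h; apply: lt_0_INR; apply/ltP.
exact: x0.
Qed.

Theorem proposition5p1 (k : nat) (q : 'S_k) :
  indecomposable q ->
  exists L : R, Un_cv (fun n : nat => nthroot (INR (Sav n q)) n) L.
Proof.
move=> Hind.
case: (leqP k 1) => k1.
  exists R0 => eps he; exists 1%N => n hn.
  have n0 : (0 < n)%N by apply/leP.
  rewrite (Sav_small q k1 n0) /nthroot /=.
  case: Rlt_dec => h; first lra.
  by rewrite /R_dist Rminus_0_r Rabs_R0.
have [K HK] := Sav_exp q k1.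
have apos n : (0 < Sav n q)%N. by apply: Sav_pos.
have ge1 n : Rle R1 (INR (Sav n q)).
  by apply: (@le_INR 1); apply/leP; exact: apos.
have K1 : Rlt R0 (INR K).
  apply: lt_0_INR; apply/ltP; have := HK 1%N; rewrite expn1 => h.
  exact: leq_trans (apos 1%N) h.
have [s Hs] : exists s, Un_cv (fun n => Rdiv (ln (INR (Sav n q))) (INR n)) s.
  apply: (@fekete_R (fun n => ln (INR (Sav n q))) (ln (INR K))).
- move=> n; rewrite -ln_1; apply: ln_le'; [lra|exact: ge1].
- move=> n p; rewrite -ln_mult; [|have := ge1 n; lra|have := ge1 p; lra].
  apply: ln_le'; first by apply: Rmult_lt_0_compat; [have := ge1 n|have := ge1 p]; lra.
  rewrite -mult_INR; apply: le_INR; apply/leP; exact: Sav_super.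
- move=> n; rewrite -ln_pow //; apply: ln_le'; first by have := ge1 n; lra.
  rewrite -pow_INR; apply: le_INR; apply/leP; rewrite powE; exact: HK.
exists (exp s).
have Hc := continuity_seq exp _ s (derivable_continuous_pt _ _ (derivable_pt_exp s)) Hs.
move=> eps he; have [N HN] := Hc eps he; exists N => n hn.
rewrite nthroot_exp //; exact: HN.
Qed.
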